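(* Let $D_5$ be the undirected tree with vertices $v,a,b,c,d$ and edges $va,vb,vc,cd$. Every finite connected undirected graph without loops, without multiple edges, and without subgraphs isomorphic to $D_5$ is one of the following: a cycle with $l\ge 3$ vertices; a path (chain) with $l\ge 0$ edges; a star $K_{1,l}$ with $l\ge 3$ edges; or a connected graph with four vertices.
   Context: ''Subgraph'' means an arbitrary (not necessarily induced) subgraph. *)

(* Defs.v *)
From mathcomp Require Import all_boot.
Set Implicit Arguments. Unset Strict Implicit. Unset Printing Implicit Defensive.

Definition simple_graph (T : finType) (e : rel T) : Prop :=
  symmetric e /\ irreflexive e.

Definition connected_graph (T : finType) (e : rel T) : Prop :=
  0 < #|T| /\ forall x y : T, connect e x y.

(* D_5: v=0, a=1, b=2, c=3, d=4; edges va, vb, vc, cd *)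
Definition D5_edge (i j : 'I_5) : bool :=
  [|| [&& val i == 0 & val j == 1],
      [&& val i == 0 & val j == 2],
      [&& val i == 0 & val j == 3] | [&& val i == 3 & val j == 4] ].

(* e has a (not necessarily induced) subgraph isomorphic to D_5:
   an injective vertex map sending every D_5 edge to an edge *)
Definition has_D5_subgraph (T : finType) (e : rel T) : Prop :=
  exists f : 'I_5 -> T, injective f /\
    forall i j : 'I_5, D5_edge i j -> e (f i) (f j).

Definition graph_iso {V T : finType} (g : rel V) (e : rel T) : Prop :=
  exists f : V -> T, bijective f /\ forall x y : V, e (f x) (f y) = g x y.

Definition cycle_rel (l : nat) : rel 'I_l :=
  fun i j => ((val i).+1 %% l == val j) || ((val j).+1 %% l == val i).

Definition path_rel (l : nat) : rel 'I_l.+1 :=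
  fun i j => ((val i).+1 == val j) || ((val j).+1 == val i).

Definition star_rel (l : nat) : rel 'I_l.+1 :=
  fun i j => (val i == 0) (+) (val j == 0).
Arguments cycle_rel l : clear implicits.
Arguments path_rel l : clear implicits.
Arguments star_rel l : clear implicits.

(* Main.v *)
Require Import Defs.
From mathcomp Require Import all_boot all_fingroup zify.
From Stdlib Require Import Classical.
Set Implicit Arguments. Unset Strict Implicit. Unset Printing Implicit Defensive.

Lemma closedP (T:finType) (e:rel T) (A : T -> Prop) x y :
  (forall u w, A u -> e u w -> A w) -> A x -> connect e x y -> A y.
Proof.
move=> HA Ax /connectP [p]; elim: p x Ax => [|z p IH] x Ax /=; first by move=> _ ->.
case/andP=> exz pz Hy; apply: (IH z) => //; exact: HA exz.
Qed.



Lemma star_iso (T:finType)(e:rel T) v : (forall x y, e x y = (x==v) (+) (y==v)) ->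
  graph_iso (star_rel #|T|.-1) e.
Proof.
move=> He; set n := #|T|.-1.
have Hn : #|T| = n.+1.
  have : 0 < #|T| by apply/card_gt0P; exists v.
  by rewrite /n; case: #|T|.
pose h (i : 'I_n.+1) : T := enum_val (cast_ord (esym Hn) i).
pose k : 'I_n.+1 := cast_ord Hn (enum_rank v).
pose f i := h (tperm ord0 k i).
have finj : injective f.
  by move=> i j /enum_val_inj /cast_ord_inj /perm_inj.
have f0 : f ord0 = v by rewrite /f tpermL /h /k cast_ordK enum_rankK.
exists f; split.
  by apply: inj_card_bij => //; rewrite card_ord Hn.
move=> x y; rewrite He -f0 !(inj_eq finj) /star_rel.
by [].
Qed.

Definition ipath (T:finType)(e:rel T) m (p : nat -> T) :=
  (forall i j, i <= m -> j <= m -> p i = p j -> i = j) /\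
  (forall i, i < m -> e (p i) (p i.+1)).

Lemma ipath_bound (T:finType)(e:rel T) m p : ipath e m p -> m < #|T|.
Proof.
case=> Hi _; pose g (i : 'I_m.+1) := p i.
have : injective g by move=> i j /Hi H; apply: val_inj; apply: H; rewrite -ltnS.
by move/leq_card; rewrite card_ord.
Qed.

Lemma ipath_rev (T:finType)(e:rel T) m p : symmetric e -> ipath e m p ->
  ipath e m (fun k => p (m - k)).
Proof.
move=> se [Hi He]; split.
  by move=> i j hi hj /Hi; lia.
move=> i hi; rewrite se.
have -> : m - i = (m - i.+1).+1 by lia.
apply: He; lia.
Qed.

Lemma ipath_ext (T:finType)(e:rel T) m p y : ipath e m p ->
  (forall i, i <= m -> p i <> y) -> e (p m) y ->
  ipath e m.+1 (fun k => if k == m.+1 then y else p k).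
Proof.
move=> [Hi He] Hy Hm; split.
  move=> i j hi hj.
  case: eqP => [ei|nei]; case: eqP => [ej|nej].
  - by rewrite ei ej.
  - move=> E; exfalso; apply: (Hy j); [lia | by []].
  - move=> E; exfalso; apply: (Hy i); [lia | by []].
  - apply: Hi; lia.
move=> i hi; case: eqP => [ei|_]; first by rewrite ei ltnn in hi.
case: eqP => [ei|ne]; first by case: ei => ->.
apply: He; lia.
Qed.

Lemma ipath_max (T:finType)(e:rel T) (x0 : T) :
  exists m p, ipath e m p /\ ~ (exists p, ipath e m.+1 p).
Proof.
suff H : forall d m, #|T| - m = d -> (exists p, ipath e m p) ->
   exists m p, ipath e m p /\ ~ (exists p, ipath e m.+1 p).
  apply: (H _ 0 erefl); exists (fun _ => x0); split; [move=> i j; lia | move=> i; lia].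
elim=> [|d IH] m Hd [p Hp].
  by have := ipath_bound Hp; lia.
case: (classic (exists p, ipath e m.+1 p)) => [H|H].
  by apply: (IH m.+1) => //; lia.
by exists m, p.
Qed.

Lemma mdE (i j m : nat) : i <= m -> (i.+1 %% m.+1 == j) = ((i < m) && (i.+1 == j)) || ((i == m) && (j == 0)).
Proof.
move=> hi; case: (eqVneq i m) => [->|n].
  by rewrite modnn ltnn /= eq_sym; case: eqP; lia.
rewrite modn_small; last lia.
have -> : (i < m) = true by lia.
by rewrite /=; case: eqP; lia.
Qed.

Lemma deg2_case (T:finType) (e:rel T) : simple_graph e -> connected_graph e ->
 (forall v a b c, e v a -> e v b -> e v c -> [\/ a = b, a = c | b = c]) ->
 (exists l, 3 <= l /\ graph_iso (cycle_rel l) e) \/ (exists l, graph_iso (path_rel l) e).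
Proof.
move=> [se ie] [c0 conn] H3.
have [x0 _] : exists x0 : T, x0 \in T by apply/card_gt0P.
have [m [p [Hp Hmax]]] := ipath_max e x0.
have Hpr := ipath_rev se Hp.
have [Hi Hpe] := Hp.
have endm : forall y, e (p m) y -> exists i, i <= m /\ p i = y.
  move=> y ey; apply: NNPP => H; apply: Hmax; eexists; apply: (ipath_ext Hp) ey.
  by move=> i hi E; apply: H; exists i.
have end0 : forall y, e (p 0) y -> exists i, i <= m /\ p i = y.
  move=> y ey; apply: NNPP => H; apply: Hmax; eexists; apply: (ipath_ext (y:=y) Hpr).
    move=> i hi E; apply: H; exists (m - i); split; [lia|by []].
  by rewrite subnn.
have mid : forall i y, 0 < i < m -> e (p i) y -> y = p i.-1 \/ y = p i.+1.
  move=> [|j] y hi ey //=.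
  have e1 : e (p j.+1) (p j) by rewrite se; apply: Hpe; lia.
  have e2 : e (p j.+1) (p j.+2) by apply: Hpe; lia.
  case: (H3 _ _ _ _ e1 e2 ey) => [E|E|E]; [|by left|by right].
  by have := Hi _ _ _ _ E; lia.
have cover : forall y, exists i, i <= m /\ p i = y.
  move=> y; apply: (closedP (A := fun y => exists i, i<=m /\ p i = y)) (conn (p 0) y);
    last by exists 0.
  move=> u w [i [hi <-]] ew.
  case: (eqVneq i m) => [Em|nm]; first by apply: endm; rewrite -Em.
  case: (eqVneq i 0) => [E0|n0]; first by apply: end0; rewrite -E0.
  case: (mid i w _ ew) => [|->|->]; first lia.
    by exists i.-1; split; [lia|].
  by exists i.+1; split; [lia|].
have edge : forall i j, i <= m -> j <= m -> e (p i) (p j) <->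
   (j = i.+1 \/ i = j.+1 \/ (e (p 0) (p m) /\ ((i = 0 /\ j = m) \/ (i = m /\ j = 0)))).
  move=> i j hi hj; split.
  - move=> eij.
    case: (eqVneq j i.+1) => [->|n1]; first by left.
    case: (eqVneq i j.+1) => [->|n2]; first by right; left.
    case: (eqVneq i j) => [Eij|nij]; first by rewrite Eij ie in eij.
    have [i0m|] := boolP (0 < i < m).
      case: (mid _ _ i0m eij) => /Hi E; have := E hj; lia.
    have [j0m|] := boolP (0 < j < m).
      rewrite se in eij.
      case: (mid _ _ j0m eij) => /Hi E; have := E hi; lia.
    move=> nj ni; right; right.
    have : (i = 0 /\ j = m) \/ (i = m /\ j = 0) by lia.
    case=> [[Ei Ej]|[Ei Ej]]; rewrite Ei Ej in eij *; split; [by [] | by left | by rewrite se | by right].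
  - case => [E|[E|[H [[E1 E2]|[E1 E2]]]]]; subst; [apply: Hpe; lia| rewrite se; apply: Hpe; lia| by []|].
    by rewrite se.
pose f (i : 'I_m.+1) := p i.
have finj : injective f.
  by move=> i j /Hi H; apply: val_inj; apply: H; rewrite -ltnS.
have fbij : bijective f.
  apply: inj_card_bij => //; rewrite card_ord.
  apply: (@leq_trans #|codom f|); last first.
    by apply: (leq_trans (card_size _)); rewrite size_codom card_ord.
  apply: subset_leq_card; apply/subsetP => y _.
  have [i [hi <-]] := cover y.
  by apply/codomP; exists (@Ordinal m.+1 i hi).
case: (boolP (e (p 0) (p m) && (2 <= m))) => [/andP [c2 m2]|nc].
  left; exists m.+1; split; first lia.
  exists f; split => // i j; rewrite /cycle_rel /f.
  case: i => [i hi]; case: j => [j hj] /=.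
  rewrite !mdE; try lia.
  apply/idP/idP.
    move/edge => H; have {H} := H (hi : i <= m) (hj : j <= m).
    lia.
  move=> H; apply/edge; [by []|by []|].
  lia.
right; exists m; exists f; split => // i j; rewrite /path_rel /f.
case: i => [i hi]; case: j => [j hj] /=.
apply/idP/idP.
  move/edge => H; have {H} := H (hi : i <= m) (hj : j <= m).
  have c0' : e (p 0) (p m) -> 0 < m by case: (m) => [|//]; rewrite ie.
  move: nc c0'; case: (e (p 0) (p m)) => /=; lia.
move=> H; apply/edge; [by []|by []|]; lia.
Qed.
Lemma mkD5 (T:finType) (e:rel T) (x0 x1 x2 x3 x4 : T) : uniq [:: x0;x1;x2;x3;x4] ->
  e x0 x1 -> e x0 x2 -> e x0 x3 -> e x3 x4 -> has_D5_subgraph e.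
Proof.
move=> u e1 e2 e3 e4.
exists (fun i : 'I_5 => nth x0 [:: x0;x1;x2;x3;x4] i); split.
  by move=> i j /eqP; rewrite nth_uniq // => /eqP; apply: val_inj.
by case=> [[|[|[|[|[|i]]]]] hi] [[|[|[|[|[|j]]]]] hj] //=; rewrite /D5_edge.
Qed.

Theorem lemma1 (T : finType) (e : rel T) :
  simple_graph e -> connected_graph e -> ~ has_D5_subgraph e ->
  [\/ exists l, 3 <= l /\ graph_iso (cycle_rel l) e,
      exists l, graph_iso (path_rel l) e,
      exists l, 3 <= l /\ graph_iso (star_rel l) e
    | #|T| = 4].
Proof.
move=> Hs Hc ND.
have [se ie] := Hs; have [c0 conn] := Hc.
have irr : forall x z, e x z -> x != z by move=> x z exz; apply/eqP=> E; rewrite E ie in exz.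
case: (classic (exists v a b c, [/\ e v a, e v b, e v c & [&& a != b, a != c & b != c]]))
  => [[v [a [b [c [eva evb evc /and3P [nab nac nbc]]]]]] | N]; last first.
  have H3 : forall v a b c, e v a -> e v b -> e v c -> [\/ a = b, a = c | b = c].
  move=> v a b c eva evb evc.
  case: (eqVneq a b) => [->|nab]; first by constructor 1.
  case: (eqVneq a c) => [->|nac]; first by constructor 2.
  case: (eqVneq b c) => [->|nbc]; first by constructor 3.
  by exfalso; apply: N; exists v, a, b, c; rewrite nab nac nbc.
  by case: (deg2_case Hs Hc H3) => H; [constructor 1 | constructor 2].
case: (eqVneq #|T| 4) => [H4|n4]; first by apply: Or44.
have va := irr _ _ eva; have vb := irr _ _ evb; have vc := irr _ _ evc.
have c4 : 4 <= #|T|.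
  have u : uniq [:: v; a; b; c] by rewrite /= !inE !negb_or va vb vc nab nac nbc.
  by move/card_uniqP: u => /= <-; apply: max_card.
have c5 : 5 <= #|T| by lia.
have nbr : forall x z, e v x -> ~~ e v z -> x != z.
  by move=> x z ex nz; apply/eqP => E; rewrite -E ex in nz.
have H1 : forall w, w != v -> e v w.
  move=> w wv; apply: NNPP => nvw.
  have : exists u y, [/\ (u = v \/ e v u), e u y & ~ (y = v \/ e v y)].
    apply: NNPP => NE; apply: nvw.
    have cl : forall u y, (u = v \/ e v u) -> e u y -> (y = v \/ e v y).
      by move=> u y Au euy; apply: NNPP => nA; apply: NE; exists u, y; split.
    have := closedP cl (or_introl erefl) (conn v w).
    by case=> [wv'|//]; rewrite wv' eqxx in wv.
  case=> u [y [Au euy nAy]].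
  case: Au => [Euv|evu]; first by subst; apply: nAy; right.
  have yv : y != v by apply/eqP => E; apply: nAy; left.
  have nvy : ~~ e v y by apply/negP => E; apply: nAy; right.
  have [a' [b' [ea' eb' na'b' na'u nb'u]]] :
      exists a' b', [/\ e v a', e v b', a' != b', a' != u & b' != u].
    case: (eqVneq a u) => [au|au].
      by exists b, c; split => //; rewrite -au eq_sym.
    case: (eqVneq b u) => [bu|bu].
      by exists a, c; split => //; rewrite -bu // eq_sym.
    by exists a, b.
  apply: ND; apply: (mkD5 (x0:=v) (x1:=a') (x2:=b') (x3:=u) (x4:=y)) => //.
  rewrite /= !inE !negb_or (irr _ _ ea') (irr _ _ eb') (irr _ _ evu) eq_sym yv.
  by rewrite na'b' na'u (nbr _ _ ea' nvy) nb'u (nbr _ _ eb' nvy) (irr _ _ euy).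
have H2 : forall x y, x != v -> y != v -> ~~ e x y.
  move=> x y xv yv; apply/negP => exy.
  have : 1 < #|[predC [:: v; x; y]]|.
    have h1 : #|[:: v;x;y]| <= 3 := card_size _.
    have h2 : #|[:: v;x;y]| + #|[predC [:: v;x;y]]| = #|T| := cardC _.
    lia.
  case/card_gt1P => a' [b' [ia ib nab']].
  move: ia ib; rewrite !inE !negb_or => /and3P [a'v a'x a'y] /and3P [b'v b'x b'y].
  apply: ND; apply: (mkD5 (x0:=v) (x1:=a') (x2:=b') (x3:=x) (x4:=y)) => //;
    try by apply: H1.
  rewrite /= !inE !negb_or !(eq_sym v) a'v b'v xv yv nab' a'x a'y b'x b'y.
  by rewrite (irr _ _ exy).
have He : forall x y, e x y = (x == v) (+) (y == v).
  move=> x y; case: (eqVneq x v) => [->|xv]; case: (eqVneq y v) => [->|yv] /=.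
  - by rewrite ie.
  - by rewrite H1.
  - by rewrite se H1.
  - by rewrite (negbTE (H2 _ _ xv yv)).
apply: Or43; exists #|T|.-1; split; first lia.
exact: star_iso He.
Qed.
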